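(* For all $x>0$ and $0\le p\le 1$, $$W_p(x,1)\le K(x)^{p(1-p)}\,L(x,1).$$ Equivalently, for all $x,y>0$ and $0\le p\le 1$: $W_p(x,y)\le K(x/y)^{p(1-p)}L(x,y)$.
   Context: $K(x)=\frac{(x+1)^2}{4x}$ (Kantorovich constant) for $x>0$. $L(x,y)=\frac{x-y}{\log x-\log y}$ for $x\ne y$, $L(x,x)=x$. The Wigner--Yanase--Dyson function is $W_p(x,y)=\frac{p(1-p)(x-y)^2}{(x^p-y^p)(x^{1-p}-y^{1-p})}$ for $x\neq y$, $p\notin\{0,1\}$, with $W_p(x,x)=x$, and $W_0=W_1=L$ (limiting values). *)

(* Defs.v *)
From Stdlib Require Import Reals.
Open Scope R_scope.

Definition Kant (x : R) : R := (x + 1) ^ 2 / (4 * x).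

Definition Lmean (x y : R) : R :=
  if Req_EM_T x y then x else (x - y) / (ln x - ln y).

Definition WYD (p x y : R) : R :=
  if Req_EM_T p 0 then Lmean x y
  else if Req_EM_T p 1 then Lmean x y
  else if Req_EM_T x y then x
  else p * (1 - p) * (x - y) ^ 2
       / ((Rpower x p - Rpower y p) * (Rpower x (1 - p) - Rpower y (1 - p))).

(* Main.v *)
Require Import Defs.
From Coquelicot Require Import Coquelicot.
From Stdlib Require Import Reals Psatz Lra.
Open Scope R_scope.

Lemma incr_helper (f f' : R -> R) a b : a <= b ->
  (forall t, a <= t <= b -> is_derive f t (f' t)) ->
  (forall t, a <= t <= b -> 0 <= f' t) -> f a <= f b.
Proof.
  intros hab hd hpos. destruct (Req_dec a b) as [->|hne]; [lra|].
  destruct (MVT_cor2 f f' a b) as [c [hc1 hc2]]; [lra| |].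
  - intros c hc. apply is_derive_Reals. auto.
  - assert (0 <= f' c) by (apply hpos; lra). nra.
Qed.

Lemma expN x : exp (- x) = / exp x.
Proof. apply exp_Ropp. Qed.

Lemma cosh_sinh x : cosh x * cosh x - sinh x * sinh x = 1.
Proof. unfold cosh, sinh. rewrite expN. assert (0 < exp x) by apply exp_pos. field. lra. Qed.

Lemma cosh_ge1 x : 1 <= cosh x.
Proof. unfold cosh. rewrite expN. assert (0 < exp x) by apply exp_pos.
  set (e := exp x) in *.
  assert (e + / e - 2 = (e - 1) * (e - 1) / e) by (field; lra).
  assert (0 <= (e - 1) * (e - 1) / e) by (unfold Rdiv; apply Rmult_le_pos; [pose proof (Rle_0_sqr (e-1)); unfold Rsqr in *; lra | left; apply Rinv_0_lt_compat; lra]).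
  lra. Qed.

Lemma cosh_pos x : 0 < cosh x.
Proof. pose proof (cosh_ge1 x). lra. Qed.

Lemma sinh_pos x : 0 < x -> 0 < sinh x.
Proof. intro h. rewrite <- sinh_0. apply sinh_lt; auto. Qed.

Lemma sinh_nonneg x : 0 <= x -> 0 <= sinh x.
Proof. intro h. destruct (Req_dec x 0) as [->|]; [rewrite sinh_0; lra|].
  left; apply sinh_pos; lra. Qed.

Lemma coshN x : cosh (- x) = cosh x.
Proof. unfold cosh. rewrite Ropp_involutive. lra. Qed.
Lemma sinhN x : sinh (- x) = - sinh x.
Proof. unfold sinh. rewrite Ropp_involutive. lra. Qed.

Lemma d_sinh (k v : R) : is_derive (fun v => sinh (k * v)) v (k * cosh (k * v)).
Proof. unfold sinh, cosh. auto_derive; try exact I; field. Qed.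
Lemma d_cosh (k v : R) : is_derive (fun v => cosh (k * v)) v (k * sinh (k * v)).
Proof. unfold sinh, cosh. auto_derive; try exact I; field. Qed.

Lemma cosh_mono a b : 0 <= a <= b -> cosh a <= cosh b.
Proof. intros h. apply (incr_helper cosh sinh); [lra| |].
  - intros t _. unfold sinh, cosh. auto_derive; try exact I; field.
  - intros t ht. apply sinh_nonneg; lra.
Qed.

Lemma sinh_ge_id z : 0 <= z -> z <= sinh z.
Proof. intros h.
  assert (H := incr_helper (fun v => sinh v - v) (fun v => cosh v - 1) 0 z).
  cbv beta in H. rewrite sinh_0 in H. enough (0 - 0 <= sinh z - z) by lra. apply H; [lra| |].
  - intros t _. unfold sinh, cosh. auto_derive; try exact I; field.
  - intros t _. pose proof (cosh_ge1 t). lra.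
Qed.

Lemma sinh_le_zcosh z : 0 <= z -> sinh z <= z * cosh z.
Proof. intros h.
  assert (H := incr_helper (fun v => v * cosh v - sinh v) (fun v => v * sinh v) 0 z).
  cbv beta in H. rewrite sinh_0 in H. enough (0 * cosh 0 - 0 <= z * cosh z - sinh z) by lra. apply H; [lra| |].
  - intros t _. unfold sinh, cosh. auto_derive; try exact I; field.
  - intros t ht. pose proof (sinh_nonneg t). nra.
Qed.

Lemma cosh_sub1 z : 0 <= z -> cosh z - 1 <= z * sinh z.
Proof. intros h.
  assert (H := incr_helper (fun v => v * sinh v - cosh v) (fun v => v * cosh v) 0 z).
  cbv beta in H. rewrite cosh_0 in H. enough (0 * sinh 0 - 1 <= z * sinh z - cosh z) by lra. apply H; [lra| |].
  - intros t _. unfold sinh, cosh. auto_derive; try exact I; field.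
  - intros t ht. pose proof (cosh_pos t). nra.
Qed.

Lemma ln_le' x y : 0 < x -> x <= y -> ln x <= ln y.
Proof. intros h1 h2. destruct (Req_dec x y) as [->|]; [lra|].
  left. apply ln_increasing; lra. Qed.

Lemma exp_le' x y : x <= y -> exp x <= exp y.
Proof. intros h. destruct (Req_dec x y) as [->|]; [lra|].
  left. apply exp_increasing; lra. Qed.

Definition Hfun r u := (r - r*r)/4 * sinh((2+r)*u) + (r + r*r)/4 * sinh((2-r)*u)
   - (1 - r*r/2) * sinh(r*u).
Definition Hd r u := (r-r*r)*(2+r)/4 * cosh((2+r)*u) + (r+r*r)*(2-r)/4 * cosh((2-r)*u)
   - (1 - r*r/2)*r*cosh(r*u).

Lemma H_nonneg r u : 0 <= r <= 1 -> 0 <= u -> 0 <= Hfun r u.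
Proof. intros hr hu.
  assert (H0 : Hfun r 0 = 0).
  { unfold Hfun. rewrite !Rmult_0_r, sinh_0. field. }
  rewrite <- H0. apply (incr_helper (Hfun r) (Hd r)); [lra| |].
  - intros t _. unfold Hfun, Hd, sinh, cosh. auto_derive; try exact I; field.
  - intros t ht.
    assert (c1 : cosh (r*t) <= cosh ((2+r)*t)) by (apply cosh_mono; nra).
    assert (c2 : cosh (r*t) <= cosh ((2-r)*t)) by (apply cosh_mono; nra).
    assert (e : Hd r t = (r-r*r)*(2+r)/4 * (cosh((2+r)*t) - cosh (r*t))
       + (r+r*r)*(2-r)/4 * (cosh((2-r)*t) - cosh(r*t))) by (unfold Hd; field).
    rewrite e. apply Rplus_le_le_0_compat; apply Rmult_le_pos; try lra.
    + assert (0 <= r - r*r) by nra. assert (0 <= (r - r*r)*(2+r)) by nra. lra.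
    + assert (0 <= r + r*r) by nra. assert (0 <= (r + r*r)*(2-r)) by nra. lra.
Qed.

Lemma H_ident r u : r * cosh (r*u) * sinh u * cosh u - sinh (r*u) * (1 + r*r * sinh u * sinh u)
  = Hfun r u.
Proof.
  unfold Hfun.
  assert (e1: exp((2+r)*u) = exp u * exp u * exp (r*u))
    by (rewrite <- !exp_plus; f_equal; ring).
  assert (e2: exp(-((2+r)*u)) = /(exp u * exp u * exp(r*u))) by (rewrite <- e1; apply expN).
  assert (e3: exp((2-r)*u) = exp u * exp u * exp (-(r*u)))
    by (rewrite <- !exp_plus; f_equal; ring).
  assert (e4: exp(-((2-r)*u)) = /(exp u * exp u * exp(-(r*u)))) by (rewrite <- e3; apply expN).
  unfold sinh, cosh. rewrite e1, e2, e3, e4, !expN.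
  assert (0 < exp u) by apply exp_pos. assert (0 < exp (r*u)) by apply exp_pos.
  field. split; lra.
Qed.

Definition Psi r v := ln (sinh (r*v)) + (1 - r*r) * ln (cosh v) - ln (sinh v).

Lemma Psi_mono r e u : 0 < r <= 1 -> 0 < e <= u -> Psi r e <= Psi r u.
Proof. intros hr he.
  apply (incr_helper (Psi r)
    (fun v => r * cosh (r*v) / sinh (r*v) + (1 - r*r) * sinh v / cosh v - cosh v / sinh v));
   [lra| |].
  - intros t ht.
    assert (h1 : 0 < sinh (r*t)) by (apply sinh_pos; nra).
    assert (h2 : 0 < sinh t) by (apply sinh_pos; lra).
    assert (h3 : 0 < cosh t) by apply cosh_pos.
    unfold Psi. unfold sinh, cosh in *. auto_derive.
    + repeat split; try exact I; assumption.
    + field. repeat split; lra.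
  - intros t ht.
    assert (h1 : 0 < sinh (r*t)) by (apply sinh_pos; nra).
    assert (h2 : 0 < sinh t) by (apply sinh_pos; lra).
    assert (h3 : 0 < cosh t) by apply cosh_pos.
    assert (ee : r * cosh (r*t) / sinh (r*t) + (1 - r*r) * sinh t / cosh t - cosh t / sinh t
      = (r * cosh (r*t) * sinh t * cosh t - sinh (r*t) * (1 + r*r * sinh t * sinh t)
         + sinh (r*t) * (1 - (cosh t * cosh t - sinh t * sinh t)))
        / (sinh (r*t) * sinh t * cosh t)) by (field; repeat split; lra).
    rewrite ee, cosh_sinh, H_ident.
    apply Rdiv_le_0_compat.
    + assert (0 <= Hfun r t) by (apply H_nonneg; lra). lra.
    + apply Rmult_lt_0_compat; [apply Rmult_lt_0_compat|]; lra.
Qed.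

Lemma psi r u : 0 <= r <= 1 -> 0 < u ->
  r * sinh u <= sinh (r*u) * exp ((1 - r*r) * ln (cosh u)).
Proof. intros hr hu.
  destruct (Req_dec r 0) as [->|hr0].
  { rewrite !Rmult_0_l, sinh_0. lra. }
  assert (hr' : 0 < r <= 1) by lra.
  assert (key : ln r <= Psi r u).
  { destruct (Rle_lt_dec (ln r) (Psi r u)) as [|hlt]; [assumption|].
    exfalso. set (d := ln r - Psi r u).
    assert (hd : 0 < d) by (unfold d; lra).
    assert (hs : 0 < sinh u) by (apply sinh_pos; lra).
    set (e := Rmin (u/2) (d / (2 * (sinh u + 1)))).
    assert (he0 : 0 < e).
    { apply Rmin_glb_lt; [lra|]. apply Rdiv_lt_0_compat; lra. }
    assert (heu : e <= u/2) by apply Rmin_l.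
    assert (hed : e <= d / (2 * (sinh u + 1))) by apply Rmin_r.
    assert (hes : e * sinh u < d).
    { assert (e * (2 * (sinh u + 1)) <= d).
      { apply (Rmult_le_compat_r (2 * (sinh u + 1))) in hed; [|lra].
        unfold Rdiv in hed. rewrite Rmult_assoc, Rinv_l in hed; lra. }
      nra. }
    assert (hP := Psi_mono r e u hr' ltac:(lra)).
    assert (a1 : ln (r*e) <= ln (sinh (r*e))).
    { apply ln_le'; [nra|]. apply sinh_ge_id; nra. }
    assert (a2 : 0 <= ln (cosh e)).
    { rewrite <- ln_1. apply ln_le'; [lra|apply cosh_ge1]. }
    assert (a3 : ln (sinh e) <= ln (e * cosh e)).
    { apply ln_le'; [apply sinh_pos; lra|]. apply sinh_le_zcosh; lra. }
    rewrite ln_mult in a1, a3; try lra; try apply cosh_pos.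
    assert (a4 : ln (cosh e) <= cosh e - 1).
    { pose proof (exp_ineq1_le (ln (cosh e))). rewrite exp_ln in H; [lra|apply cosh_pos]. }
    assert (a5 : cosh e - 1 <= e * sinh e) by (apply cosh_sub1; lra).
    assert (a6 : sinh e <= sinh u).
    { destruct (Req_dec e u) as [E|]; [rewrite E; lra|]. left; apply sinh_lt; lra. }
    assert (a7 : 0 <= (1 - r*r) * ln (cosh e)) by (apply Rmult_le_pos; nra).
    assert (a8 : e * sinh e <= e * sinh u) by (apply Rmult_le_compat_l; lra).
    unfold d in hes. unfold Psi in hP, hes. lra. }
  unfold Psi in key.
  assert (hs : 0 < sinh u) by (apply sinh_pos; lra).
  assert (hsr : 0 < sinh (r*u)) by (apply sinh_pos; nra).
  assert (k2 : ln (r * sinh u) <= ln (sinh (r*u)) + (1 - r*r) * ln (cosh u)).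
  { rewrite ln_mult; lra. }
  apply exp_le' in k2. rewrite exp_plus, !exp_ln in k2; try lra.
  apply Rmult_lt_0_compat; lra.
Qed.

Lemma core u r : 0 < u -> 0 <= r <= 1 ->
  (1 - r*r) * u * sinh u * exp (-((1-r*r) * ln (cosh u) / 2)) <= 2 * (cosh u - cosh (r*u)).
Proof. intros hu hr.
  assert (hs : 0 < sinh u) by (apply sinh_pos; lra).
  assert (hL : 0 <= ln (cosh u)) by (rewrite <- ln_1; apply ln_le'; [lra|apply cosh_ge1]).
  assert (hpsi : forall t, 0 <= t <= 1 -> t * sinh u <= sinh (t*u) * exp ((1 - t*t) * ln (cosh u)))
    by (intros; apply psi; lra).
  remember (ln (cosh u)) as L. remember (sinh u) as s. remember (cosh u) as c.
  assert (H := incr_helper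
    (fun t => (1-t*t)*u*s*exp(-((1-t*t)*L/2)) - 2*(c - cosh(t*u)))
    (fun t => u*s*exp(-((1-t*t)*L/2))*(t*(1-t*t)*L - 2*t) + 2*u*sinh(t*u)) r 1).
  cbv beta in H.
  assert (E1 : (1 - 1*1)*u*s*exp(-((1-1*1)*L/2)) - 2*(c - cosh(1*u)) = 0).
  { replace (1*u) with u by ring. rewrite Heqc. replace (1 - 1*1) with 0 by ring. rewrite !Rmult_0_l. ring. }
  enough ((1-r*r)*u*s*exp(-((1-r*r)*L/2)) - 2*(c - cosh(r*u)) <= 0) by lra.
  rewrite <- E1. apply H; [lra| |].
  - intros t _. unfold cosh, sinh. auto_derive; try exact I.
    replace (exp (- ((1 + - (t * t)) * L * / 2))) with (exp (- ((1 - t * t) * L / 2))) by reflexivity. field.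
  - intros t ht. set (y := (1-t*t)*L/2).
    assert (hy : 0 <= y) by (unfold y; apply Rmult_le_pos; [apply Rmult_le_pos; nra|lra]).
    set (e := exp (-y)).
    assert (he : 0 < e) by apply exp_pos.
    assert (h1 : 1 - y <= e) by (pose proof (exp_ineq1_le (-y)); unfold e; lra).
    assert (h2 : e * e * exp ((1 - t*t) * L) = 1).
    { unfold e. rewrite <- !exp_plus. replace (-y + -y + (1-t*t)*L) with 0 by (unfold y; field).
      apply exp_0. }
    assert (h3 := hpsi t ltac:(lra)).
    assert (hts : 0 <= t * s) by (apply Rmult_le_pos; lra).
    assert (h4 : t * s * e * (1 - y) <= t * s * e * e).
    { apply Rmult_le_compat_l; [apply Rmult_le_pos|]; lra. }
    assert (h5 : t * s * (e * e) <= sinh (t*u) * exp ((1-t*t)*L) * (e*e))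
      by (apply Rmult_le_compat_r; nra).
    assert (h6 : sinh (t*u) * exp ((1-t*t)*L) * (e*e) = sinh (t*u)).
    { replace (sinh (t*u) * exp ((1-t*t)*L) * (e*e)) with (sinh (t*u) * (e*e*exp((1-t*t)*L))) by ring. rewrite h2. ring. }
    assert (heq : u * s * e * (t * (1 - t*t) * L - 2 * t)
       + 2 * u * sinh (t * u) = 2 * u * (sinh (t*u) - t * s * e * (1 - y))).
    { unfold y. field. }
    rewrite heq. apply Rmult_le_pos; [lra|]. nra.
Qed.

Lemma cosh_abs z : cosh (Rabs z) = cosh z.
Proof. destruct (Rcase_abs z); [rewrite Rabs_left, coshN | rewrite Rabs_pos_eq]; lra. Qed.
Lemma usinh_abs z : Rabs z * sinh (Rabs z) = z * sinh z.
Proof. destruct (Rcase_abs z); [rewrite Rabs_left, sinhN by lra; ring | rewrite Rabs_pos_eq; lra]. Qed.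
Lemma sq_abs z : Rabs z * Rabs z = z * z.
Proof. destruct (Rcase_abs z); [rewrite Rabs_left by lra; ring | rewrite Rabs_pos_eq; lra]. Qed.

Lemma core_gen u r0 : u <> 0 -> -1 <= r0 <= 1 ->
  (1 - r0*r0) * (u * sinh u) * exp (-((1-r0*r0) * ln (cosh u) / 2)) <= 2 * (cosh u - cosh (r0*u)).
Proof. intros hu hr.
  assert (h := core (Rabs u) (Rabs r0) ltac:(apply Rabs_pos_lt; auto)
     ltac:(split; [apply Rabs_pos| apply Rabs_le; lra])).
  rewrite sq_abs, cosh_abs, <- Rabs_mult, cosh_abs in h.
  rewrite <- usinh_abs. eapply Rle_trans; [|exact h]. right; ring.
Qed.

Lemma usinh_pos u : u <> 0 -> 0 < u * sinh u.
Proof. intro h. rewrite <- usinh_abs. assert (0 < Rabs u) by (apply Rabs_pos_lt; auto).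
  assert (0 < sinh (Rabs u)) by (apply sinh_pos; lra). nra. Qed.

Theorem theorem2p3 (x p : R) (hx : 0 < x) (hp0 : 0 <= p) (hp1 : p <= 1) :
  WYD p x 1 <= Rpower (Kant x) (p * (1 - p)) * Lmean x 1.
Proof.
  destruct (Req_dec p 0) as [hp|hp]; [|destruct (Req_dec p 1) as [hq|hq]].
  1,2: unfold WYD; unfold Rpower;
    replace (p * (1 - p)) with 0 by (rewrite ?hp, ?hq; ring);
    rewrite !Rmult_0_l, exp_0, Rmult_1_l;
    destruct (Req_EM_T p 0); [lra|]; destruct (Req_EM_T p 1); lra.
  unfold WYD. destruct (Req_EM_T p 0); [lra|]. destruct (Req_EM_T p 1); [lra|].
  destruct (Req_EM_T x 1) as [hx1|hx1].
  { subst x. unfold Lmean. destruct (Req_EM_T 1 1); [|lra].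
    replace (Kant 1) with 1 by (unfold Kant; field).
    unfold Rpower. rewrite ln_1, Rmult_0_r, exp_0. lra. }
  unfold Lmean. destruct (Req_EM_T x 1); [lra|].
  set (u := ln x / 2).
  assert (hxu : x = exp (2*u)) by (unfold u; replace (2 * (ln x / 2)) with (ln x) by field;
     rewrite exp_ln; auto).
  assert (hu : u <> 0) by (intro h0; apply hx1; rewrite hxu, h0, Rmult_0_r, exp_0; auto).
  clearbody u. subst x.
  assert (K1 : Kant (exp (2*u)) = cosh u * cosh u).
  { unfold Kant, cosh. replace (2*u) with (u+u) by ring. rewrite exp_plus, expN.
    assert (0 < exp u) by apply exp_pos. field. lra. }
  unfold Rpower. rewrite K1, ln_mult by apply cosh_pos. rewrite !ln_exp, ln_1, !Rmult_0_r, exp_0.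
  set (r0 := 2*p - 1).
  set (L := ln (cosh u)).
  set (X := exp u). set (Y := exp (r0 * u)).
  assert (hX : 0 < X) by apply exp_pos. assert (hY : 0 < Y) by apply exp_pos.
  assert (e1 : exp (2*u) = X*X) by (unfold X; rewrite <- exp_plus; f_equal; ring).
  assert (e2 : exp (p*(2*u)) = X*Y) by (unfold X, Y, r0; rewrite <- exp_plus; f_equal; ring).
  assert (e3 : exp ((1-p)*(2*u)) = X * / Y)
    by (unfold X, Y, r0; rewrite <- expN, <- exp_plus; f_equal; ring).
  rewrite e1, e2, e3.
  set (G := exp (p * (1 - p) * (L + L))).
  assert (hG : 0 < G) by apply exp_pos.
  assert (hc := core_gen u r0 hu ltac:(unfold r0; lra)).
  fold L in hc.
  assert (hEG : exp (- ((1 - r0*r0) * L / 2)) * G = 1).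
  { unfold G. rewrite <- exp_plus. match goal with |- exp ?a = 1 => replace a with 0 by (unfold r0; field) end. apply exp_0. }
  apply (Rmult_le_compat_r G) in hc; [|lra].
  replace ((1 - r0 * r0) * (u * sinh u) * exp (- ((1 - r0 * r0) * L / 2)) * G)
    with ((1 - r0 * r0) * (u * sinh u) * (exp (- ((1 - r0 * r0) * L / 2)) * G)) in hc by ring.
  rewrite hEG in hc.
  assert (hP := usinh_pos u hu).
  unfold sinh, cosh in hc, hP. rewrite !expN in hc, hP. fold X Y in hc, hP.
  set (P := u * ((X - / X) / 2)) in *.
  set (D := X + / X - (Y + / Y)).
  assert (hD : 2 * ((X + / X) / 2 - (Y + / Y) / 2) = D) by (unfold D; field; repeat split; lra).
  rewrite (expN (r0*u)) in hc. fold Y in hc. rewrite hD, Rmult_1_r, (Rmult_comm D) in hc.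
  assert (hDpos : 0 < D).
  { assert (0 < (1 - r0*r0)) by (unfold r0; nra).
    assert (0 < (1 - r0 * r0) * P * 1) by (rewrite Rmult_1_r; apply Rmult_lt_0_compat; lra).
    nra. }
  assert (hprod : (X*Y - 1) * (X * / Y - 1) = X * D) by (unfold D; field; repeat split; lra).
  assert (hXY1 : X*Y - 1 <> 0).
  { intro h0. assert (X * D = 0) by (rewrite <- hprod, h0; ring). nra. }
  assert (hXY2 : X * / Y - 1 <> 0).
  { intro h0. assert (X * D = 0) by (rewrite <- hprod, h0; ring). nra. }
  assert (hXX : X * X - 1 = 2 * X * (P / u)) by (unfold P; field; repeat split; lra).
  apply Rminus_le.
  assert (heq2 : p * (1 - p) * (X * X - 1) ^ 2 / ((X * Y - 1) * (X * / Y - 1)) -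
     G * ((X * X - 1) / (2 * u - 0))
     = - (X * P / (u * u * D)) * (G * D - (1 - r0*r0) * P)).
  { rewrite hprod, hXX. unfold r0. field. repeat split; lra. }
  rewrite heq2.
  assert (0 < X * P / (u * u * D)).
  { apply Rdiv_lt_0_compat; [nra|]. assert (0 < u*u) by (destruct (Rlt_or_le u 0); nra). nra. }
  assert (0 <= G * D - (1 - r0 * r0) * P) by lra.
  assert (0 <= X * P / (u * u * D) * (G * D - (1 - r0 * r0) * P)) by (apply Rmult_le_pos; lra).
  lra.
Qed.
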